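(* Let $r\in(0,1)$ and let $X$ be the geometric armadillo tail with parameter $r$. Then there exists a closed saddle connection on $X$ in the direction of slope $\frac{1}{2-r}$ that intersects every square torus $\square_k$, $k\ge1$.
   Context: Set $l_k=r^{k-1}$, $s_k=l_1+\dots+l_k$ ($s_0=0$), and $\square_k=[s_{k-1},s_k]\times[0,l_k]\subset\mathbb{R}^2$. The geometric armadillo tail with parameter $r$ is obtained from $P=\bigcup_k\square_k$ by gluing the top edge of each $\square_k$ to its bottom edge by vertical translation, and for each $k\ge1$ gluing $\{s_k\}\times[l_{k+1},l_k]$ (the part of the right edge of $\square_k$ not shared with $\square_{k+1}$) by horizontal translation to $\{0\}\times[l_{k+1},l_k]$; then taking the metric completion, in which all vertices become a single wild singularity. With these identifications each $\square_k$ is a square torus (the surface is an infinite connected sum of them). Slopes are measured in the polygonal representation $P$. A saddle connection is a closed straight-line segment starting and ending at the singularity with no singular point in its interior. *)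

(* Defs.v *)
From Stdlib Require Import Reals ZArith.
Open Scope R_scope.

(** Geometric armadillo tail with parameter r.
    Squares are indexed by k >= 1 (nat). *)

Definition len (r : R) (k : nat) : R := r ^ (k - 1).

Fixpoint spos (r : R) (k : nat) : R :=
  match k with
  | O => 0
  | S k' => spos r k' + len r (S k')
  end.

Definition in_square (r : R) (k : nat) (p : R * R) : Prop :=
  (1 <= k)%nat /\
  spos r (k - 1) <= fst p <= spos r k /\ 0 <= snd p <= len r k.

Definition is_corner (r : R) (k : nat) (p : R * R) : Prop :=
  (1 <= k)%nat /\
  (fst p = spos r (k - 1) \/ fst p = spos r k) /\
  (snd p = 0 \/ snd p = len r k).

(* points of P which become the (single, wild) singularity: all vertices
   of the squares, and the points (0, l_k) of the left edge of square 1,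
   which are glued to the vertices (s_{k-1}, l_k). *)
Definition singular_pt (r : R) (p : R * R) : Prop :=
  (exists k, is_corner r k p) \/
  (exists k, (1 <= k)%nat /\ p = (0, len r k)).

(* For a flow direction with positive components: points on the edges
   through which the flow enters (left/bottom) or exits (right/top) the
   square k. *)
Definition entry_pt (r : R) (k : nat) (p : R * R) : Prop :=
  in_square r k p /\ (fst p = spos r (k - 1) \/ snd p = 0).

Definition exit_pt (r : R) (k : nat) (p : R * R) : Prop :=
  in_square r k p /\ (fst p = spos r k \/ snd p = len r k).

(* The identifications of the surface, read in the direction of a flow
   with positive components: the exit point p of square k is the same
   point of the surface as the entry point q of square m. *)
Definition glue (r : R) (k : nat) (p : R * R) (m : nat) (q : R * R) : Prop :=
  (snd p = len r k /\ m = k /\ q = (fst p, 0)) \/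
  (fst p = spos r k /\ len r (S k) <= snd p <= len r k /\
     m = 1%nat /\ q = (0, snd p)) \/
  (* the shared edge {s_k} x [0, l_{k+1}] of squares k and k+1 *)
  (fst p = spos r k /\ 0 <= snd p <= len r (S k) /\ m = S k /\ q = p).

Definition dir (sigma : R) : R * R := (1, sigma).

Definition pt_move (p : R * R) (s : R) (v : R * R) : R * R :=
  (fst p + s * fst v, snd p + s * snd v).

Fixpoint sumZ (f : Z -> R) (m : Z) (n : nat) : R :=
  match n with
  | O => 0
  | S n' => f m + sumZ f (m + 1)%Z n'
  end.

(** A saddle connection in the direction of slope sigma > 0, oriented along
    (1, sigma), described by its successive maximal pieces in the squares.
    The pieces are indexed by a nonempty interval J of integers (finite,
    or infinite on one or both sides).  The total length is finite (an
    end with infinitely many pieces then converges, in the metric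
    completion, to the wild singularity). *)
Definition saddle_connection (r sigma : R) (J : Z -> Prop) (sq : Z -> nat)
    (a : Z -> R * R) (t : Z -> R) : Prop :=
  let v := dir sigma in
  (exists i, J i) /\
  (forall i j k, J i -> J k -> (i <= j <= k)%Z -> J j) /\
  (forall i, J i ->
     0 < t i /\
     (forall s, 0 <= s <= t i -> in_square r (sq i) (pt_move (a i) s v)) /\
     entry_pt r (sq i) (a i) /\
     exit_pt r (sq i) (pt_move (a i) (t i) v)) /\
  (forall i, J i -> J (i + 1)%Z ->
     glue r (sq i) (pt_move (a i) (t i) v) (sq (i + 1)%Z) (a (i + 1)%Z)) /\
  (forall i s, J i -> 0 <= s <= t i -> singular_pt r (pt_move (a i) s v) ->
     (s = 0 /\ ~ J (i - 1)%Z) \/ (s = t i /\ ~ J (i + 1)%Z)) /\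
  (forall i, J i -> ~ J (i - 1)%Z -> singular_pt r (a i)) /\
  (forall i, J i -> ~ J (i + 1)%Z -> singular_pt r (pt_move (a i) (t i) v)) /\
  (exists B, forall m n,
     (forall j, (m <= j < m + Z.of_nat n)%Z -> J j) -> sumZ t m n <= B).

(* Main.v *)
Require Import Defs.
From Stdlib Require Import Reals ZArith Lia Lra Psatz Arith.
Open Scope R_scope.

Lemma len_S r k : len r (S k) = r ^ k.
Proof. unfold len. simpl. rewrite Nat.sub_0_r. reflexivity. Qed.

Lemma spos_S r k : spos r (S k) = spos r k + r ^ k.
Proof. simpl. rewrite len_S. reflexivity. Qed.

Section S.
Variable r : R.
Hypothesis hr : 0 < r < 1.

Lemma powpos k : 0 < r ^ k.
Proof. apply pow_lt; lra. Qed.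

Lemma pow_le1 k : r ^ S k <= r.
Proof.
  induction k. simpl; lra.
  change (r ^ S (S k)) with (r * r ^ S k). nra.
Qed.

Lemma spos_le j m : (j <= m)%nat -> spos r j <= spos r m.
Proof.
  induction 1. lra. rewrite spos_S. pose proof (powpos m). lra.
Qed.

Lemma spos_lt j m : (j < m)%nat -> spos r j < spos r m.
Proof.
  intros H. destruct m. lia. rewrite spos_S. pose proof (powpos m).
  pose proof (spos_le j m ltac:(lia)). lra.
Qed.

Lemma spos_inj j m : spos r j = spos r m -> j = m.
Proof.
  intros H. destruct (lt_eq_lt_dec j m) as [[h|h]|h]; auto.
  - pose proof (spos_lt _ _ h). lra.
  - pose proof (spos_lt _ _ h). lra.
Qed.

Lemma spos_nonneg k : 0 <= spos r k.
Proof. apply (spos_le 0 k). lia. Qed.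

Lemma between_not_sing k x y :
  spos r k < x < spos r (S k) -> ~ singular_pt r (x, y).
Proof.
  intros Hx [[k' [H1 [H2 H3]]] | [k' [H1 H2]]]; cbn [fst snd] in *.
  - assert (forall j, x <> spos r j).
    { intros j E. destruct (le_lt_dec j k).
      + pose proof (spos_le _ _ l). lra.
      + pose proof (spos_le (S k) j l). lra. }
    destruct H2 as [E|E]; exact (H _ E).
  - injection H2; intros. pose proof (spos_nonneg k). lra.
Qed.

Lemma sing_at_spos k y : singular_pt r (spos r k, y) ->
  y = 0 \/ y = r ^ k \/ ((1 <= k)%nat /\ y = r ^ (k - 1)) \/
  (k = 0%nat /\ exists j, y = r ^ j).
Proof.
  intros [[k' [H1 [H2 H3]]] | [k' [H1 H2]]]; cbn [fst snd] in *.
  - destruct H2 as [E|E]; apply spos_inj in E; subst.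
    + destruct H3 as [E|E]; auto.
    + destruct H3 as [E|E]; auto.
  - injection H2; intros E1 E2. right; right; right.
    split. destruct k; auto. pose proof (spos_lt 0 (S k) ltac:(lia)) as HH. change (spos r 0) with 0 in HH. lra.
    unfold len in E1. eauto.
Qed.


Let sg := / (2 - r).
Lemma sg_facts : sg * (2 - r) = 1 /\ 0 < sg /\ sg < 1 /\ r < sg /\ sg * r < 1.
Proof.
  unfold sg. assert (E : / (2 - r) * (2 - r) = 1) by (field; lra).
  assert (P : 0 < / (2 - r)) by (apply Rinv_0_lt_compat; lra).
  repeat split; auto; nra.
Qed.

Definition sqN (n : nat) : nat :=
  match n with O => 1%nat | S m => S (Nat.div2 m) end.
Definition aN (n : nat) : R * R :=
  match n with
  | O => (0, 0)
  | S m => let k := Nat.div2 m in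
      if Nat.even m then (spos r k, sg * r ^ k)
      else (spos r k + (1 - r) * r ^ k, 0)
  end.
Definition tN (n : nat) : R :=
  match n with
  | O => 1
  | S m => let k := Nat.div2 m in
      if Nat.even m then (1 - r) * r ^ k else r * r ^ k
  end.
Definition FN (n : nat) : R :=
  match n with
  | O => 1 + / (1 - r)
  | S m => let k := Nat.div2 m in
      if Nat.even m then r ^ k / (1 - r) else r * r ^ k + r * r ^ k / (1 - r)
  end.

Lemma evA k : Nat.div2 (2 * k) = k /\ Nat.even (2 * k) = true.
Proof. split; [apply Nat.div2_even | apply Nat.even_even]. Qed.
Lemma evB k : Nat.div2 (2 * k + 1) = k /\ Nat.even (2 * k + 1) = false.
Proof. split; [apply Nat.div2_odd' | apply Nat.even_odd]. Qed.

Lemma caseN (P : nat -> Prop) : P O -> (forall k, P (S (2 * k))) ->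
  (forall k, P (S (2 * k + 1))) -> forall n, P n.
Proof.
  intros H0 HA HB [|m]; auto. destruct (Nat.Even_or_Odd m) as [[k ->]|[k ->]]; auto.
Qed.

Lemma F_step n : FN n = tN n + FN (S n).
Proof.
  pose proof (powpos 0).
  revert n; apply caseN; [|intros k|intros k]; unfold FN, tN.
  -
    simpl. field. lra.
  - destruct (evA k) as [-> ->]. replace (S (2 * k)) with (2 * k + 1)%nat by lia.
    destruct (evB k) as [-> ->]. field. lra.
  - destruct (evB k) as [-> ->]. replace (S (2 * k + 1)) with (2 * (S k))%nat by lia.
    destruct (evA (S k)) as [-> ->]. simpl. field. lra.
Qed.

Lemma t_pos n : 0 < tN n.
Proof.
  revert n; apply caseN; [|intros k|intros k]; unfold tN; try lra.
  - destruct (evA k) as [-> ->]. pose proof (powpos k). nra.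
  - destruct (evB k) as [-> ->]. pose proof (powpos k). nra.
Qed.

Lemma F_nonneg n : 0 <= FN n.
Proof.
  assert (0 < / (1 - r)) by (apply Rinv_0_lt_compat; lra).
  revert n; apply caseN; [|intros k|intros k]; unfold FN; try lra.
  - destruct (evA k) as [-> ->]. pose proof (powpos k). unfold Rdiv. nra.
  - destruct (evB k) as [-> ->]. pose proof (powpos k). unfold Rdiv.
    assert (0 <= r * r ^ k * / (1 - r)). { apply Rmult_le_pos; nra. } nra.
Qed.

Lemma F_le0 n : FN n <= FN 0.
Proof.
  induction n. lra. pose proof (F_step n). pose proof (t_pos n). lra.
Qed.

Lemma in_sq_S k x y : spos r k <= x <= spos r k + r ^ k -> 0 <= y <= r ^ k ->
  in_square r (S k) (x, y).
Proof.
  intros. unfold in_square. cbn [fst snd].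
  replace (S k - 1)%nat with k by lia. rewrite spos_S, len_S. repeat split; try lia; lra.
Qed.

Lemma entry_S k x y : in_square r (S k) (x, y) -> (x = spos r k \/ y = 0) ->
  entry_pt r (S k) (x, y).
Proof.
  intros H1 H2. split; auto. cbn [fst snd]. replace (S k - 1)%nat with k by lia. auto.
Qed.

Lemma exit_S k x y : in_square r (S k) (x, y) -> (x = spos r k + r ^ k \/ y = r ^ k) ->
  exit_pt r (S k) (x, y).
Proof.
  intros H1 H2. split; auto. cbn [fst snd]. rewrite spos_S, len_S. auto.
Qed.

Definition v := dir sg.

Lemma piece_ok n :
  (forall s, 0 <= s <= tN n -> in_square r (sqN n) (pt_move (aN n) s v)) /\
  entry_pt r (sqN n) (aN n) /\
  exit_pt r (sqN n) (pt_move (aN n) (tN n) v).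
Proof.
  destruct sg_facts as (E & P & L1 & L2 & L3).
  assert (EL : forall L, sg * L * (2 - r) = L).
  { intros L. rewrite (Rmult_comm sg L), Rmult_assoc, E. ring. }
  revert n; apply caseN; [|intros k|intros k]; unfold v, dir, pt_move, sqN, aN, tN; cbn [fst snd].
  - change 1%nat with (S 0). pose proof (in_sq_S 0). simpl spos in H. simpl pow in H.
    split; [|split].
    + intros s Hs. apply H; nra.
    + apply entry_S. apply H; lra. auto.
    + apply exit_S. apply H; lra. simpl. lra.
  - destruct (evA k) as [-> ->]. pose proof (powpos k). pose proof (EL (r ^ k)). split; [|split].
    + intros s Hs. apply in_sq_S; cbn [fst snd]; nra.
    + apply entry_S. apply in_sq_S; cbn [fst snd]; nra. auto.
    + apply exit_S. apply in_sq_S; cbn [fst snd]; nra. right. cbn [fst snd]. nra.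
  - destruct (evB k) as [-> ->]. pose proof (powpos k). pose proof (EL (r ^ k)). split; [|split].
    + intros s Hs. apply in_sq_S; cbn [fst snd]; nra.
    + apply entry_S. apply in_sq_S; cbn [fst snd]; nra. auto.
    + apply exit_S. apply in_sq_S; cbn [fst snd]; nra. left. cbn [fst snd]. nra.
Qed.

Lemma glue_ok n : glue r (sqN n) (pt_move (aN n) (tN n) v) (sqN (S n)) (aN (S n)).
Proof.
  destruct sg_facts as (E & P & L1 & L2 & L3).
  assert (EL : forall L, sg * L * (2 - r) = L).
  { intros L. rewrite (Rmult_comm sg L), Rmult_assoc, E. ring. }
  revert n; apply caseN; [|intros k|intros k].
  - right; left. unfold v, dir, pt_move, sqN, aN, tN, len; simpl.
    repeat split; try lra. unfold len; simpl; ring. f_equal; ring.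
  - replace (S (S (2 * k))) with (S (2 * k + 1)) by lia.
    unfold v, dir, pt_move, sqN, aN, tN.
    destruct (evA k) as [-> ->]. destruct (evB k) as [-> ->]. cbn [fst snd].
    left. rewrite len_S. pose proof (EL (r ^ k)). cbn [fst snd]. split; [nra|split; auto].
    f_equal; ring.
  - replace (S (S (2 * k + 1))) with (S (2 * S k)) by lia.
    unfold v, dir, pt_move, sqN, aN, tN.
    destruct (evA (S k)) as [-> ->]. destruct (evB k) as [-> ->]. cbn [fst snd].
    right; right. rewrite !len_S, spos_S. pose proof (powpos k).
    cbn [fst snd]. simpl pow. assert (0 < r * r ^ k) by nra. split; [ring|split; [split; nra|split; auto]]. f_equal; ring.
Qed.

Lemma not_pow_sg j : sg <> r ^ j.
Proof.
  destruct sg_facts as (E & P & L1 & L2 & L3).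
  destruct j. simpl; lra. pose proof (pow_le1 j). lra.
Qed.

Lemma sing_ok n s : 0 <= s <= tN n -> singular_pt r (pt_move (aN n) s v) ->
  s = 0 /\ n = 0%nat.
Proof.
  destruct sg_facts as (E & P & L1 & L2 & L3).
  revert n; apply (caseN (fun n => 0 <= s <= tN n -> singular_pt r (pt_move (aN n) s v) -> s = 0 /\ n = 0%nat)); [|intros k|intros k];
    unfold v, dir, pt_move, sqN, aN, tN; intros Hs Hsg.
  - split; auto. cbn [fst snd] in Hsg.
    destruct (Req_dec s 0); auto. destruct (Req_dec s 1) as [->|].
    + exfalso. replace (0 + 1 * 1) with (spos r 1) in Hsg by (simpl; unfold len; simpl; ring).
      apply sing_at_spos in Hsg. simpl in Hsg.
      destruct Hsg as [H1|[H1|[[_ H1]|[H1 _]]]]; try lra; lia.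
    + exfalso. refine (between_not_sing 0 _ _ _ Hsg).
      simpl. unfold len; simpl. lra.
  - destruct (evA k) as [E1 E2]; rewrite E1, E2 in Hs, Hsg. exfalso. cbn [fst snd] in Hsg.
    pose proof (powpos k).
    destruct (Req_dec s 0) as [->|].
    + replace (spos r k + 0 * 1) with (spos r k) in Hsg by ring.
      apply sing_at_spos in Hsg.
      destruct Hsg as [H1|[H1|[[H2 H1]|[-> [j H1]]]]]; try nra.
      * destruct k. lia. simpl in H1. rewrite Nat.sub_0_r in H1.
        pose proof (powpos k). assert (0 < r * r ^ k) by nra. nra.
      * simpl in H1. apply (not_pow_sg j). lra.
    + refine (between_not_sing k _ _ _ Hsg).
      rewrite spos_S. nra.
  - destruct (evB k) as [E1 E2]; rewrite E1, E2 in Hs, Hsg. exfalso. cbn [fst snd] in Hsg.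
    pose proof (powpos k).
    destruct (Req_dec s (r * r ^ k)) as [->|].
    + replace (spos r k + (1 - r) * r ^ k + r * r ^ k * 1) with (spos r (S k)) in Hsg
        by (rewrite spos_S; ring).
      apply sing_at_spos in Hsg.
      destruct Hsg as [H1|[H1|[[H2 H1]|[H2 _]]]]; try nra; try lia.
      simpl in H1. assert (0 < r * r ^ k) by nra. nra.
      simpl in H1. rewrite Nat.sub_0_r in H1. nra.
    + refine (between_not_sing k _ _ _ Hsg).
      rewrite spos_S. nra.
Qed.

End S.

Lemma sum_F r (hr : 0 < r < 1) n : forall m, (0 <= m)%Z ->
  sumZ (fun i => tN r (Z.to_nat i)) m n = FN r (Z.to_nat m) - FN r (Z.to_nat m + n).
Proof.
  induction n; intros m Hm; simpl.
  - rewrite Nat.add_0_r. ring.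
  - rewrite IHn by lia.
    replace (Z.to_nat (m + 1)) with (S (Z.to_nat m)) by lia.
    replace (Z.to_nat m + S n)%nat with (S (Z.to_nat m) + n)%nat by lia.
    rewrite (F_step r hr (Z.to_nat m)). ring.
Qed.

Theorem theorem2p1 (r : R) (hr : 0 < r < 1) :
  exists (J : Z -> Prop) (sq : Z -> nat) (a : Z -> R * R) (t : Z -> R),
    saddle_connection r (/ (2 - r)) J sq a t /\
    (forall k : nat, (1 <= k)%nat -> exists i, J i /\ sq i = k).
Proof.
  exists (fun i => (0 <= i)%Z), (fun i => sqN (Z.to_nat i)),
    (fun i => aN r (Z.to_nat i)), (fun i => tN r (Z.to_nat i)).
  split.
  - unfold saddle_connection. cbv zeta.
    split; [exists 0%Z; lia|].
    split; [intros; lia|].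
    split.
    { intros i Hi. destruct (piece_ok r hr (Z.to_nat i)) as (A & B & C).
      split; [apply t_pos; auto|]. split; [exact A|]. split; [exact B|exact C]. }
    split.
    { intros i Hi Hi1. replace (Z.to_nat (i + 1)) with (S (Z.to_nat i)) by lia.
      apply glue_ok; auto. }
    split.
    { intros i s Hi Hs Hsg. destruct (sing_ok r hr (Z.to_nat i) s Hs Hsg) as [-> Hn].
      left. split; auto. lia. }
    split.
    { intros i Hi Hn. replace (Z.to_nat i) with 0%nat by lia. simpl.
      left. exists 1%nat. split; [lia|]. simpl. split; auto. }
    split.
    { intros i Hi Hn. exfalso. lia. }
    exists (FN r 0). intros m n H. destruct n.
    + cbn [sumZ]. pose proof (F_nonneg r hr 0). lra.
    + assert (Hm : (0 <= m)%Z) by (apply H; lia).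
      rewrite (sum_F r hr _ _ Hm).
      pose proof (F_nonneg r hr (Z.to_nat m + S n)). pose proof (F_le0 r hr (Z.to_nat m)). lra.
  - intros k Hk. exists (Z.of_nat (S (2 * (k - 1)))). split; [lia|].
    rewrite Nat2Z.id. unfold sqN. rewrite Nat.div2_even. lia.
Qed.
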